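(* Let $\sigma : \mathcal{S} \to \mathcal{A}$ be a strong-receptive courteous pre-$\sim$-strategy on a thin concurrent game $\mathcal{A}$; then $\mathcal{S}$ is race-preserving as well.
   Context: $e \rightarrow e'$ denotes immediate causal dependency ($e<e'$ with nothing strictly between). An essp is an event structure with polarities $A$ with a symmetry $(\tilde A,l_A,r_A)$, equivalently an isomorphism family $\mathbb{S}_A$ of bijections between configurations. An essp $\mathcal{A}$ is race-preserving if $l_A$ preserves races: whenever a configuration of $\tilde A$ (an isomorphism $\theta\in\mathbb{S}_A$) extends by a negative event and by a positive event to configurations of $\tilde A$ whose union is not a configuration of $\tilde A$, then the images under $l_A$ are likewise incompatible in $A$. A thin concurrent game (tcg) is an essp which is race-preserving and has receptive thin sub-symmetries of $\mathcal{A}^\perp$ and $\mathcal{A}$. A pre-$\sim$-strategy is a map of essps; it is courteous if $s_1 \rightarrow s_2$ with $\mathrm{pol}(s_1)=+$ or $\mathrm{pol}(s_2)=-$ implies $\sigma s_1 \rightarrow \sigma s_2$, and strong-receptive if whenever $\theta\in\mathbb{S}_S$ and $\sigma\theta$ extends in $\mathbb{S}_A$ by a pair $(a_1,a_2)$ of negative events, there is a unique extension $\theta\cup\{(s_1,s_2)\}\in\mathbb{S}_S$ with $\sigma s_i=a_i$. *)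

(* Defs.v *)
From Stdlib Require Import List.
Import ListNotations.
Unset Implicit Arguments.

Record ES := {
  ev :> Type;
  le : ev -> ev -> Prop;
  con : list ev -> Prop;
  le_refl : forall e, le e e;
  le_trans : forall e1 e2 e3, le e1 e2 -> le e2 e3 -> le e1 e3;
  le_antisym : forall e1 e2, le e1 e2 -> le e2 e1 -> e1 = e2;
  finite_causes : forall e, exists l, forall e', le e' e <-> In e' l;
  con_single : forall e, con [e];
  con_sub : forall l l', (forall e, In e l' -> In e l) -> con l -> con l';
  con_down : forall l e e', con l -> In e' l -> le e e' -> con (e :: l)
}.

Definition lt (E : ES) (e e' : E) : Prop := le E e e' /\ e <> e'.

Definition imm (E : ES) (e e' : E) : Prop :=
  lt E e e' /\ ~ (exists e'', lt E e e'' /\ lt E e'' e').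

Definition config (E : ES) (x : E -> Prop) : Prop :=
  (exists l, (forall e, x e <-> In e l) /\ con E l) /\
  (forall e e', x e' -> le E e e' -> x e).

Definition subset {T : Type} (x y : T -> Prop) : Prop := forall e, x e -> y e.
Definition seteq {T : Type} (x y : T -> Prop) : Prop := forall e, x e <-> y e.

Definition brel (E : ES) := E -> E -> Prop.

Definition dom {E : ES} (t : brel E) : E -> Prop := fun a => exists b, t a b.
Definition cod {E : ES} (t : brel E) : E -> Prop := fun b => exists a, t a b.

Definition cfg_bij (E : ES) (t : brel E) : Prop :=
  (forall a b b', t a b -> t a b' -> b = b') /\
  (forall a a' b, t a b -> t a' b -> a = a') /\
  config E (dom t) /\ config E (cod t).

Definition idrel {E : ES} (x : E -> Prop) : brel E := fun a b => x a /\ a = b.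
Definition invrel {E : ES} (t : brel E) : brel E := fun a b => t b a.
Definition comprel {E : ES} (t u : brel E) : brel E :=
  fun a c => exists b, t a b /\ u b c.            (* u o t *)
Definition restr {E : ES} (t : brel E) (x : E -> Prop) : brel E :=
  fun a b => t a b /\ x a.
Definition relsub {E : ES} (t u : brel E) : Prop := forall a b, t a b -> u a b.
Definition releq {E : ES} (t u : brel E) : Prop := forall a b, t a b <-> u a b.
Definition ext {E : ES} (t : brel E) (a1 a2 : E) : brel E :=
  fun a b => t a b \/ (a = a1 /\ b = a2).

Definition iso_family (E : ES) (S : brel E -> Prop) : Prop :=
  (forall t, S t -> cfg_bij E t) /\
  (forall t u, S t -> releq t u -> S u) /\
  (forall x, config E x -> S (idrel x)) /\
  (forall t, S t -> S (invrel t)) /\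
  (forall t u, S t -> S u -> seteq (cod t) (dom u) -> S (comprel t u)) /\
  (forall t x, S t -> config E x -> subset x (dom t) -> S (restr t x)) /\
  (forall t x', S t -> config E x' -> subset (dom t) x' ->
     exists t', S t' /\ relsub t t' /\ seteq (dom t') x').

Record essp := {
  es :> ES;
  pol : es -> bool;                 (* true = positive (+), false = negative (-) *)
  sym : brel es -> Prop;
  sym_iso : iso_family es sym;
  sym_pol : forall t a b, sym t -> t a b -> pol a = pol b
}.

(* Race-preservation: configurations of the symmetry event structure ~A are
   the elements of S_A, l_A sends theta to its domain. *)
Definition race_preserving (A : essp) : Prop :=
  forall (t : brel A) (a1 a2 b1 b2 : A),
    sym A t ->
    ~ dom t a1 -> pol A a1 = false -> sym A (ext t a1 a2) ->
    ~ dom t b1 -> pol A b1 = true  -> sym A (ext t b1 b2) ->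
    ~ sym A (fun a b => t a b \/ (a = a1 /\ b = a2) \/ (a = b1 /\ b = b2)) ->
    ~ config A (fun e => dom t e \/ e = a1 \/ e = b1).

(* A receptive thin sub-symmetry of the essp whose underlying event
   structure and symmetry are those of A, with polarity p
   (p = pol A for A, p = negb o pol A for A^perp). *)
Definition receptive_thin_subsym (A : essp) (p : A -> bool)
    (S' : brel A -> Prop) : Prop :=
  iso_family A S' /\
  (forall t, S' t -> sym A t) /\
  (forall t a1 a2, S' t -> ~ dom t a1 -> p a1 = false ->
     sym A (ext t a1 a2) -> S' (ext t a1 a2)) /\
  (forall x a1 a2, config A x -> ~ x a1 -> p a1 = true ->
     S' (ext (idrel x) a1 a2) -> a1 = a2).

Definition tcg (A : essp) : Prop :=
  race_preserving A /\
  (exists Sm Sp : brel A -> Prop,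
     receptive_thin_subsym A (fun a => negb (pol A a)) Sm /\
     receptive_thin_subsym A (pol A) Sp).

Definition image {S A : ES} (f : S -> A) (x : S -> Prop) : A -> Prop :=
  fun a => exists s, x s /\ f s = a.

Definition maprel {S A : ES} (f : S -> A) (t : brel S) : brel A :=
  fun a b => exists s s', t s s' /\ f s = a /\ f s' = b.

Definition essp_map (S A : essp) (f : S -> A) : Prop :=
  (forall s, pol A (f s) = pol S s) /\
  (forall x, config S x -> config A (image f x)) /\
  (forall x s s', config S x -> x s -> x s' -> f s = f s' -> s = s') /\
  (forall t, sym S t -> sym A (maprel f t)).

Definition courteous (S A : essp) (f : S -> A) : Prop :=
  forall s1 s2, imm S s1 s2 -> (pol S s1 = true \/ pol S s2 = false) ->
    imm A (f s1) (f s2).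

Definition strong_receptive (S A : essp) (f : S -> A) : Prop :=
  forall (t : brel S) (a1 a2 : A),
    sym S t -> ~ dom (maprel f t) a1 -> pol A a1 = false ->
    sym A (ext (maprel f t) a1 a2) ->
    (exists s1 s2, sym S (ext t s1 s2) /\ f s1 = a1 /\ f s2 = a2) /\
    (forall s1 s2 s1' s2',
       sym S (ext t s1 s2) -> f s1 = a1 -> f s2 = a2 ->
       sym S (ext t s1' s2') -> f s1' = a1 -> f s2' = a2 ->
       s1 = s1' /\ s2 = s2').

(* Main.v *)
Require Import Defs.
From Stdlib Require Import List Classical Arith.
Import ListNotations.

Lemma sym_releq (A : essp) t u : sym A t -> releq t u -> sym A u.
Proof. intros H E. destruct (sym_iso A) as [_ [Hr _]]. eauto. Qed.

Lemma sym_cfg (A : essp) t : sym A t -> cfg_bij A t.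
Proof. intros H. destruct (sym_iso A) as [Hc _]. eauto. Qed.

Lemma sym_restr (A : essp) t x : sym A t -> config A x -> subset x (dom t) -> sym A (restr t x).
Proof. intros H1 H2 H3. destruct (sym_iso A) as [_ [_ [_ [_ [_ [Hr _]]]]]]. eauto. Qed.

Lemma config_seteq E x y : config E x -> seteq x y -> config E y.
Proof.
  intros [[l [Hl Hc]] Hd] Hs. split.
  - exists l. split; auto. intro e. rewrite <- (Hs e). auto.
  - intros e e' H1 H2. apply Hs. apply (Hd e e'); auto. apply Hs; auto.
Qed.

Lemma remove_ex (T : Type) (l : list T) x : In x l ->
  exists l', S (length l') <= length l /\ forall y, In y l -> y <> x -> In y l'.
Proof.
  induction l as [|a l IH]; simpl; [tauto|]. intros Hin.
  destruct (classic (a = x)) as [Ha|Ha].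
  - exists l. split; [auto|]. intros y [Hy|Hy] Hne; [congruence|auto].
  - destruct Hin as [Hin|Hin]; [congruence|].
    destruct (IH Hin) as [l' [Hlen Hl']]. exists (a :: l'). simpl. split; [apply le_n_S; auto|].
    intros y [Hy|Hy] Hne; [left; auto|right; auto].
Qed.

Lemma imm_below_aux (E : ES) s : forall n (l : list E), length l <= n -> forall c, lt E c s ->
  (forall e, lt E c e -> lt E e s -> In e l) -> exists e, le E c e /\ imm E e s.
Proof.
  induction n as [|n IH]; intros l Hlen c Hc Hl.
  - exists c. split; [apply le_refl|]. split; auto. intros [e [H1 H2]].
    destruct l; [apply (Hl e H1 H2)|simpl in Hlen; inversion Hlen].
  - destruct (classic (exists e'', lt E c e'' /\ lt E e'' s)) as [[e'' [H1 H2]]|Hno].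
    + destruct (remove_ex _ l e'' (Hl _ H1 H2)) as [l' [Hlen' Hl']].
      destruct (IH l' (le_S_n _ _ (Nat.le_trans _ _ _ Hlen' Hlen)) e'' H2) as [e0 [He0 Hi]].
      * intros e Ha Hb. apply Hl'; [apply Hl; auto|].
        -- split. apply (le_trans E _ e''); [apply H1|apply Ha].
           intro Heq; subst. destruct H1 as [H1 Hn]. apply Hn. apply le_antisym; [apply H1|apply Ha].
        -- intro Heq; subst. destruct Ha; auto.
      * exists e0. split; auto. apply (le_trans E _ e''); [apply H1|auto].
    + exists c. split; [apply le_refl|]. split; auto.
Qed.

Lemma imm_below (E : ES) s c : lt E c s -> exists e, le E c e /\ imm E e s.
Proof.
  intros H. destruct (finite_causes E s) as [l Hl].
  apply (imm_below_aux E s (length l) l (le_n _) c H).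
  intros e _ [He _]. apply Hl; auto.
Qed.

Lemma maprel_ext {S A : ES} (f : S -> A) t a b u v :
  maprel f (ext t a b) u v <-> ext (maprel f t) (f a) (f b) u v.
Proof.
  unfold maprel, ext. split.
  - intros [s [s' [[H|[-> ->]] [<- <-]]]]; [left; eauto|right; auto].
  - intros [[s [s' [H [<- <-]]]]|[-> ->]]; [exists s, s'; auto|exists a, b; auto].
Qed.

Theorem mainTheorem9 (A S : essp) (sigma : S -> A) :
  tcg A ->
  essp_map S A sigma ->
  courteous S A sigma ->
  strong_receptive S A sigma ->
  race_preserving S.
Proof.
  intros [RPA _] [Hpol [Himg [Hinj Hmap]]] Hcour Hsr.
  unfold race_preserving. intros t a1 a2 b1 b2 Ht Hna1 Hpa1 Hta Hnb1 Hpb1 Htb Hnot Hx.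
  set (x := fun e => dom t e \/ e = a1 \/ e = b1) in Hx.
  assert (Hab : a1 <> b1) by (intro; subst; congruence).
  assert (inj' : forall s s', x s -> x s' -> sigma s = sigma s' -> s = s') by (intros; eapply Hinj; eauto).
  assert (Hdx : forall e, dom t e -> x e) by (intros e He; left; auto).
  assert (Hxa : x a1) by (right; left; auto).
  assert (Hxb : x b1) by (right; right; auto).
  set (T := maprel sigma t).
  assert (nTa : ~ dom T (sigma a1)).
  { intros [b [s [s' [Hss [Hs _]]]]]. assert (s = a1) by (apply inj'; auto; apply Hdx; exists s'; auto).
    subst. apply Hna1. exists s'; auto. }
  assert (nTb : ~ dom T (sigma b1)).
  { intros [b [s [s' [Hss [Hs _]]]]]. assert (s = b1) by (apply inj'; auto; apply Hdx; exists s'; auto).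
    subst. apply Hnb1. exists s'; auto. }
  assert (HTa : sym A (ext T (sigma a1) (sigma a2))).
  { apply (sym_releq A (maprel sigma (ext t a1 a2))); [auto|]. intros u v. apply maprel_ext. }
  assert (HTb : sym A (ext T (sigma b1) (sigma b2))).
  { apply (sym_releq A (maprel sigma (ext t b1 b2))); [auto|]. intros u v. apply maprel_ext. }
  assert (HUA : sym A (fun a b => T a b \/ (a = sigma a1 /\ b = sigma a2) \/ (a = sigma b1 /\ b = sigma b2))).
  { apply NNPP. intro Hn.
    apply (RPA T (sigma a1) (sigma a2) (sigma b1) (sigma b2) (Hmap t Ht) nTa
      (eq_trans (Hpol a1) Hpa1) HTa nTb (eq_trans (Hpol b1) Hpb1) HTb Hn).
    apply (config_seteq _ (image sigma x)); [apply Himg; auto|].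
    intro e. split.
    - intros [s [ [ [s' Hs']|[->| ->]] <-]]; [left; exists (sigma s'), s, s'; auto|right; left; auto|right; right; auto].
    - intros [[b [s [s' [Hs [<- _]]]]]|[->| ->]]; [exists s; split; auto; apply Hdx; exists s'; auto|exists a1; auto|exists b1; auto]. }
  destruct (Hsr (ext t b1 b2) (sigma a1) (sigma a2) Htb) as [[s1 [s2 [Hs12 [Hs1 Hs2]]]] _].
  { intros [b Hb]. apply maprel_ext in Hb. destruct Hb as [HT|[He _]].
    - apply nTa. exists b; auto.
    - apply Hab. apply inj'; auto. }
  { rewrite Hpol; auto. }
  { apply (sym_releq A _ _ HUA). intros u v. pose proof (maprel_ext sigma t b1 b2 u v) as E.
    unfold ext in *. unfold T. tauto. }
  assert (Hps1 : pol S s1 = false) by (rewrite <- Hpol, Hs1, Hpol; auto).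
  assert (Hsb : s1 <> b1) by (intro; subst; congruence).
  destruct (sym_cfg S _ Hs12) as [_ [_ [HD _]]].
  assert (HDs1 : dom (ext (ext t b1 b2) s1 s2) s1) by (exists s2; right; auto).
  destruct (sym_cfg S _ Ht) as [_ [_ [Hdt _]]].
  destruct (sym_cfg S _ Hta) as [_ [_ [Hz _]]].
  assert (Hcause : forall e, lt S e s1 -> dom t e).
  { intros c Hc. destruct (imm_below _ _ _ Hc) as [e [Hce Hes]].
    enough (dom t e) by (apply (proj2 Hdt c e); auto).
    assert (Hi := Hcour e s1 Hes (or_intror Hps1)).
    destruct (Himg _ Hz) as [_ Hzd].
    assert (Hze : image sigma (dom (ext t a1 a2)) (sigma e)).
    { apply (Hzd _ (sigma a1)). exists a1; split; auto. exists a2; right; auto.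
      rewrite <- Hs1. apply Hi. }
    destruct Hze as [e' [He' Hee']].
    assert (HDe : dom (ext (ext t b1 b2) s1 s2) e).
    { apply (proj2 HD e s1); auto. apply Hes. }
    destruct HDe as [b [[Htb'|[-> _]]|[-> _]]].
    - exists b; auto.
    - exfalso. assert (Hxe' : x e').
      { destruct He' as [b' [Hb'|[-> _]]]; [apply Hdx; exists b'; auto|auto]. }
      assert (e' = b1) by (apply inj'; auto). subst.
      destruct He' as [b' [Hb'|[Heq _]]]; [apply Hnb1; exists b'; auto|congruence].
    - exfalso. destruct Hes as [[_ Hn] _]. auto. }
  set (y := fun e => dom t e \/ e = s1).
  assert (Hy : config S y).
  { destruct Hdt as [[l [Hl Hcl]] Hdd]. destruct HD as [[L [HL HcL]] _]. split.
    - exists (s1 :: l). split.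
      + intro e. unfold y. simpl. rewrite Hl. split; intros [H|H]; auto.
      + apply (con_sub S L); auto. intros e [<-|He]; apply HL; auto.
        apply Hl in He. destruct He as [b Hb]. exists b. left; left; auto.
    - intros e e' [He'| ->] Hle; [left; apply (Hdd e e'); auto|].
      destruct (classic (e = s1)) as [->|Hne]; [right; auto|left; apply Hcause; split; auto]. }
  assert (Hts1 : sym S (ext t s1 s2)).
  { apply (sym_releq S (restr (ext (ext t b1 b2) s1 s2) y)).
    - apply sym_restr; auto. intros e [[b Hb]| ->]; auto. exists b; left; left; auto.
    - intros u v. unfold restr, ext, y. split.
      + intros [[[H|[-> _]]|H] Hu]; auto. exfalso. destruct Hu as [Hu|Hu]; auto.
      + intros [H|[-> ->]]; split; auto. left; exists v; auto. }
  destruct (Hsr t (sigma a1) (sigma a2) Ht nTa (eq_trans (Hpol a1) Hpa1) HTa) as [_ Hu].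
  destruct (Hu a1 a2 s1 s2 Hta eq_refl eq_refl Hts1 Hs1 Hs2) as [<- <-].
  apply Hnot. apply (sym_releq S _ _ Hs12). intros u v. unfold ext. tauto.
Qed.
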